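(* Let $1<q<\infty$, $\alpha,\beta\in\mathbb R$, and let $f\in\mathbb M^2\cap\mathbb W_q^{\alpha,\beta}$ be nonnegative on $[-1,1]$. Then $f^q\in\mathbb M^2\cap\mathbb W_1^{q\alpha,q\beta}$, and for every $\delta>0$, \[ \omega_\varphi^2(f,\delta)_{w_{\alpha,\beta},q}\le c\,\omega_\varphi^2(f^q,\delta)_{w_{q\alpha,q\beta},1}^{1/q}, \] with $c$ independent of $f$ and $\delta$.
   Context: For $x\in[-1,1]$, $\varphi(x)=\sqrt{1-x^2}$, $w_{\alpha,\beta}(x)=(1+x)^\alpha(1-x)^\beta$. $\|g\|_{L_q(S)}$ is the $L_q$ norm over $S$; $\mathbb W_q^{\alpha,\beta}=\{f:\|w_{\alpha,\beta}f\|_{L_q[-1,1]}<\infty\}$. $\Delta_h^2(f,x)=f(x-h)-2f(x)+f(x+h)$ if $x\pm h\in[-1,1]$, else $0$; $\overrightarrow\Delta_h^2(f,x)=\Delta_h^2(f,x+h)$, $\overleftarrow\Delta_h^2(f,x)=\Delta_h^2(f,x-h)$. For a weight $w$: $\Omega_\varphi^2(f,\delta)_{w,q}=\sup_{0<h\le\delta}\|w(x)\Delta^2_{h\varphi(x)}(f,x)\|_{L_q[-1+8h^2,1-8h^2]}$, $\overrightarrow\Omega_\varphi^2(f,\delta)_{w,q}=\sup_{0<h\le8\delta^2}\|w\overrightarrow\Delta_h^2(f,\cdot)\|_{L_q[-1,-1+8\delta^2]}$, $\overleftarrow\Omega_\varphi^2(f,\delta)_{w,q}=\sup_{0<h\le8\delta^2}\|w\overleftarrow\Delta_h^2(f,\cdot)\|_{L_q[1-8\delta^2,1]}$,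 $\omega_\varphi^2=\Omega_\varphi^2+\overrightarrow\Omega_\varphi^2+\overleftarrow\Omega_\varphi^2$. $\mathbb M^2$ is the set of convex functions on $(-1,1)$ (all second divided differences nonnegative). *)

(* Defs.v *)
From HB Require Import structures.
From mathcomp Require Import all_boot all_order all_algebra.
From mathcomp Require Import all_classical all_reals all_analysis.
Set Implicit Arguments. Unset Strict Implicit. Unset Printing Implicit Defensive.
Import Order.TTheory GRing.Theory Num.Theory.
Local Open Scope classical_set_scope.
Local Open Scope ring_scope.

Section Defs.
Variable R : realType.

Definition phi (x : R) : R := Num.sqrt (1 - x ^+ 2).

Definition wab (a b : R) (x : R) : R := ((1 + x) `^ a) * ((1 - x) `^ b).

Definition LqS (S : set R) (q : R) (g : R -> R) : \bar R :=
  ((\int[@lebesgue_measure R]_(x in S) ((`|g x| `^ q)%:E)) `^ q^-1)%E.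

Definition inW (q a b : R) (f : R -> R) : Prop :=
  (LqS `[(-1)%R, 1%R] q (fun x => (wab a b x * f x)%R) < +oo)%E.

(* M^2 : convex on (-1,1), i.e. all second divided differences nonnegative *)
Definition M2 (f : R -> R) : Prop :=
  forall x y z : R, -1 < x -> x < y -> y < z -> z < 1 ->
    0 <= ((f z - f y) / (z - y) - (f y - f x) / (y - x)) / (z - x).

Definition Delta2 (f : R -> R) (h x : R) : R :=
  if (-1 <= x - h) && (x + h <= 1) then f (x - h) - 2 * f x + f (x + h) else 0.

Definition Delta2f (f : R -> R) (h x : R) : R := Delta2 f h (x + h).
Definition Delta2b (f : R -> R) (h x : R) : R := Delta2 f h (x - h).

Definition Omega2 (w : R -> R) (q : R) (f : R -> R) (delta : R) : \bar R :=
  ereal_sup [set LqS `[-1 + 8 * h ^+ 2, 1 - 8 * h ^+ 2] q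
                   (fun x => w x * Delta2 f (h * phi x) x) | h in `]0, delta]].

Definition Omega2f (w : R -> R) (q : R) (f : R -> R) (delta : R) : \bar R :=
  ereal_sup [set LqS `[-1, -1 + 8 * delta ^+ 2] q
                   (fun x => w x * Delta2f f h x) | h in `]0, 8 * delta ^+ 2]].

Definition Omega2b (w : R -> R) (q : R) (f : R -> R) (delta : R) : \bar R :=
  ereal_sup [set LqS `[1 - 8 * delta ^+ 2, 1] q
                   (fun x => w x * Delta2b f h x) | h in `]0, 8 * delta ^+ 2]].

Definition omega2 (w : R -> R) (q : R) (f : R -> R) (delta : R) : \bar R :=
  (Omega2 w q f delta + Omega2f w q f delta + Omega2b w q f delta)%E.

End Defs.

(* Main.v *)
Require Import Defs.
From HB Require Import structures.
From mathcomp Require Import all_boot all_order all_algebra.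
From mathcomp Require Import all_classical all_reals all_analysis.
From mathcomp Require Import ring lra.
Import Order.TTheory GRing.Theory Num.Theory.
Local Open Scope classical_set_scope.
Local Open Scope ring_scope.
Import HBNNSimple.
Lemma ae_le_int d (T : measurableType d) (R : realType) (mu : {measure set T -> \bar R})
  (D N : set T) (f g : T -> \bar R) : measurable N -> mu N = 0%E ->
  (forall x, D x -> (0 <= f x)%E) -> (forall x, D x -> (0 <= g x)%E) ->
  (forall x, D x -> ~ N x -> (f x <= g x)%E) ->
  (\int[mu]_(x in D) f x <= \int[mu]_(x in D) g x)%E.
Proof.
move=> mN N0 f0 g0 fg.
rewrite (ge0_integralE _ f0) (ge0_integralE _ g0).
apply: ge_ereal_sup => _ [h /= hf <-].
have mCN : measurable (~` N) by exact: measurableC.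
pose h' := mul_nnsfun h (indic_nnsfun R mCN).
have -> : sintegral mu h = sintegral mu h'.
  rewrite -!integralT_nnsfun; apply: ae_eq_integral => //.
  - by apply/measurable_realfun.measurable_EFinP; exact: measurable_funP.
  - by apply/measurable_realfun.measurable_EFinP; exact: measurable_funP.
  - exists N; split => // x /= hx; apply: contrapT => Nx; apply: hx => _.
    rewrite /h' /=; rewrite /mul_nnsfun /=. by rewrite measurable_realfun.mindicE mem_set // mulr1.
apply: ereal_sup_ubound; exists h' => //= x.
rewrite /h' /= measurable_realfun.mindicE.
have [Nx|Nx] := pselect (N x).
  rewrite memNset ?mulr0; last by move=> /(_ Nx).
  rewrite /patch; case: ifP => // /[1!inE] Dx; exact: g0.
rewrite mem_set // mulr1; apply: (le_trans (hf x)).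
rewrite /patch; case: ifP => // /[1!inE] Dx; exact: fg.
Qed.
Lemma powR_conv {R : realType} (p t x y : R) : 1 <= p -> 0 <= x -> 0 <= y -> 0 <= t -> t <= 1 ->
  (t * x + (1 - t) * y) `^ p <= t * x `^ p + (1 - t) * y `^ p.
Proof.
move=> p1 x0 y0 t0 t1.
have := (convex_powR p1 (Itv01 t0 t1)).
move=> /(_ x y); rewrite !inE /= !in_itv /= !andbT => /(_ x0 y0).
by rewrite !convRE.
Qed.

Lemma powR_superadd {R : realType} (p x y : R) : 1 <= p -> 0 <= x -> 0 <= y ->
  x `^ p + y `^ p <= (x + y) `^ p.
Proof.
move=> p1 x0 y0.
have p0 : 0 < p by rewrite (lt_le_trans _ p1).
have [->|x0'] := eqVneq x 0.
  by rewrite add0r powR0 ?gt_eqF // add0r.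
have xy0 : 0 <= x + y by rewrite addr_ge0.
rewrite -(mulr_powRB1 x0 p0) -(mulr_powRB1 y0 p0) -(mulr_powRB1 xy0 p0) mulrDl.
have q0 : 0 <= p - 1 by rewrite subr_ge0.
rewrite lerD // ler_wpM2l // ge0_ler_powR // ?nnegrE //.
- by rewrite lerDl.
- by rewrite lerDr.
Qed.
Lemma delta_pow {R : realType} (p A B C : R) : 1 <= p -> 0 <= A -> 0 <= B -> 0 <= C ->
  2 * B <= A + C ->
  (A - 2 * B + C) `^ p <= 2 `^ (p - 1) * (A `^ p - 2 * B `^ p + C `^ p).
Proof.
move=> p1 A0 B0 C0 BAC.
have p0 : 0 < p by rewrite (lt_le_trans _ p1).
set m := (A + C) / 2.
have mB : 0 <= m - B by rewrite subr_ge0 /m ler_pdivlMr // mulrC.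
have hm : m `^ p <= 2^-1 * A `^ p + (1 - 2^-1) * C `^ p.
  have := @powR_conv R p (2^-1) A C p1 A0 C0.
  have -> : 2^-1 * A + (1 - 2^-1) * C = m.
    by rewrite /m; field.
  apply; first by rewrite invr_ge0.
  by rewrite invf_le1 // ler1n.
have hs := @powR_superadd R p B (m - B) p1 B0 mB.
rewrite [B + _]addrC subrK in hs.
have -> : A - 2 * B + C = 2 * (m - B) by rewrite /m; field.
rewrite powRM // -(mulr_powRB1 (ler0n _ 2) p0) -mulrA mulrCA ler_wpM2l ?powR_ge0 //.
have h2 : (m - B) `^ p <= 2^-1 * A `^ p + 2^-1 * C `^ p - B `^ p.
  rewrite lerBrDr addrC; apply: le_trans hs _; move: hm.
  by have -> : (1 - 2^-1 : R) = 2^-1 by field.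
apply: (le_trans (ler_wpM2l (ler0n _ 2) h2)).
rewrite le_eqVlt; apply/orP; left; apply/eqP; by field.
Qed.
Lemma wab_pow {R : realType} (q a b y : R) : -1 <= y <= 1 ->
  wab (q * a) (q * b) y = (wab a b y) `^ q.
Proof.
move=> /andP[y1 y2].
have h1 : 0 <= 1 + y by rewrite -lerBlDl sub0r.
have h2 : 0 <= 1 - y by rewrite subr_ge0.
rewrite /wab powRM ?powR_ge0 // -!powRrM [a * q]mulrC [b * q]mulrC.
by [].
Qed.

Lemma pw {R : realType} (q a b : R) (f : R -> R) (s y z : R) : 1 <= q -> M2 f ->
  (forall x : R, -1 <= x <= 1 -> 0 <= f x) -> 0 <= s -> y - s != -1 -> y + s != 1 ->
  ((-1 <= y - s) && (y + s <= 1) -> -1 <= z <= 1) ->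
  `|wab a b z * Delta2 f s y| `^ q <=
  2 `^ (q - 1) * `|wab (q * a) (q * b) z * Delta2 (fun x => f x `^ q) s y| `^ 1.
Proof.
move=> q1 cf f0 s0 hl hr hz.
have q0 : 0 < q by rewrite (lt_le_trans _ q1).
have K0 : 0 <= 2 `^ (q - 1) :> R by rewrite powR_ge0.
rewrite /Delta2; case: ifP => [lr|_]; last first.
  by rewrite mulr0 normr0 powR0 ?gt_eqF // mulr_ge0 // powR_ge0.
have [->|sp] := eqVneq s 0.
  rewrite subr0 addr0.
  have -> : f y - 2 * f y + f y = 0 by ring.
  by rewrite mulr0 normr0 powR0 ?gt_eqF // mulr_ge0 // powR_ge0.
have zin := hz lr.
move/andP: lr => [l1 r1].
have sp' : 0 < s by rewrite lt_neqAle eq_sym sp.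
have l1' : -1 < y - s by rewrite lt_neqAle eq_sym hl.
have r1' : y + s < 1 by rewrite lt_neqAle hr.
have yin : -1 <= y <= 1 by apply/andP; split; lra.
have A0 : 0 <= f (y - s) by apply: f0; apply/andP; split; lra.
have B0 : 0 <= f y by apply: f0.
have C0 : 0 <= f (y + s) by apply: f0; apply/andP; split; lra.
have conv : 2 * f y <= f (y - s) + f (y + s).
  have := cf (y - s) y (y + s) l1' ltac:(lra) ltac:(lra) r1'.
  set A := f (y - s); set B := f y; set C := f (y + s).
  have -> : ((C - B) / (y + s - y) - (B - A) / (y - (y - s))) / (y + s - (y - s))
     = (A - 2 * B + C) / (2 * s ^+ 2) by field; lra.
  move=> H.
  have : 0 <= (A - 2 * B + C) / (2 * s ^+ 2) * (2 * s ^+ 2).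
    by rewrite mulr_ge0 // mulr_ge0 // sqr_ge0.
  rewrite divfK; first lra.
  by rewrite mulf_neq0 // sqrf_eq0.
have w0 : 0 <= wab a b z by rewrite /wab mulr_ge0 // powR_ge0.
have D0 : 0 <= f (y - s) - 2 * f y + f (y + s) by lra.
have dp := @delta_pow R q _ _ _ q1 A0 B0 C0 conv.
have Dq0 : 0 <= f (y - s) `^ q - 2 * f y `^ q + f (y + s) `^ q.
  have Kp : 0 < 2 `^ (q - 1) :> R by rewrite powR_gt0.
  have := powR_ge0 (f (y - s) - 2 * f y + f (y + s)) q.
  move: dp Kp; set X := (_ `^ q); set Y := (_ + f (y + s) `^ q); set K := 2 `^ _.
  move=> *; nra.
rewrite wab_pow // powRr1 ?normr_ge0 // !ger0_norm ?mulr_ge0 ?powR_ge0 //.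
rewrite powRM // mulrCA ler_wpM2l ?powR_ge0 //.
Qed.
Lemma int_scale_le d (T : measurableType d) (R : realType) (mu : {measure set T -> \bar R})
  (D : set T) (g : T -> \bar R) (K : R) : 0 < K ->
  (forall x, D x -> (0 <= g x)%E) ->
  (\int[mu]_(x in D) (K%:E * g x) <= K%:E * \int[mu]_(x in D) g x)%E.
Proof.
move=> K0 g0.
have Kg0 : forall x, D x -> (0 <= K%:E * g x)%E.
  move=> x Dx; apply: mule_ge0; [by rewrite lee_fin ltW | exact: g0].
rewrite (ge0_integralE _ Kg0) (ge0_integralE _ g0).
apply: ge_ereal_sup => _ [h /= hf <-].
have Ki0 : 0 <= K^-1 by rewrite invr_ge0 ltW.
pose h' := scale_nnsfun h Ki0.
have -> : sintegral mu h = (K%:E * sintegral mu h')%E.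
  rewrite -sintegralrM; apply: eq_sintegral => x /=.
  by rewrite mulrA mulfV ?gt_eqF // mul1r.
rewrite lee_pmul2l ?lte_fin //.
apply: ereal_sup_ubound; exists h' => //= x.
move: (hf x); rewrite /patch; case: ifP => _ /=; last first.
  rewrite lee_fin => H; rewrite (_ : point = 0%E) // lee_fin mulr_ge0_le0 // ?H.
case: (g x) => [r||] /=.
- rewrite -EFinM !lee_fin => H.
  by rewrite ler_pdivrMl // (le_trans H) // mulrC.
- by rewrite leey.
- by rewrite mulrNy gtr0_sg // mul1e leeNy_eq => /eqP.
Qed.

Lemma LqS_step {R : realType} (S : set R) (q K : R) (g1 g2 : R -> R) : 0 < q -> 0 < K ->
  (\int[@lebesgue_measure R]_(x in S) (`|g1 x| `^ q)%:E <=
     K%:E * \int[@lebesgue_measure R]_(x in S) (`|g2 x| `^ 1)%:E)%E ->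
  (LqS S q g1 <= (K `^ q^-1)%:E * (LqS S 1 g2) `^ q^-1)%E.
Proof.
move=> q0 K0 H; rewrite /LqS invr1 poweRe1; last first.
  by apply: integral_ge0 => x _; rewrite lee_fin powR_ge0.
rewrite -poweR_EFin -poweRM; first last.
- by apply: integral_ge0 => x _; rewrite lee_fin powR_ge0.
- by rewrite lee_fin ltW.
apply: gt0_ler_poweR; first by rewrite invr_ge0 ltW.
- rewrite in_itv /= leey andbT.
  by apply: integral_ge0 => x _; rewrite lee_fin powR_ge0.
- rewrite in_itv /= leey andbT; apply: mule_ge0; first by rewrite lee_fin ltW.
  by apply: integral_ge0 => x _; rewrite lee_fin powR_ge0.
exact: H.
Qed.

Lemma LqS_le {R : realType} (q a b : R) (f : R -> R) (S N : set R) (sf cf : R -> R) :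
  1 < q -> M2 f -> (forall x : R, -1 <= x <= 1 -> 0 <= f x) ->
  measurable N -> lebesgue_measure N = 0%E ->
  (forall x, 0 <= sf x) ->
  (forall x, ~ N x -> cf x - sf x != -1 /\ cf x + sf x != 1) ->
  (forall x, (-1 <= cf x - sf x) && (cf x + sf x <= 1) -> -1 <= x <= 1) ->
  (LqS S q (fun x => (wab a b x * Delta2 f (sf x) (cf x))%R) <=
   ((2 `^ (q - 1)) `^ q^-1)%:E *
   (LqS S 1 (fun x => (wab (q * a) (q * b) x * Delta2 (fun x => f x `^ q) (sf x) (cf x))%R)) `^ q^-1)%E.
Proof.
move=> q1 cf0 f0 mN N0 s0 hN hz.
have q0 : 0 < q by rewrite (lt_trans _ q1).
have K0 : 0 < 2 `^ (q - 1) :> R by rewrite powR_gt0.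
have K0' : (0 <= (2 `^ (q - 1))%:E)%E by rewrite lee_fin powR_ge0.
apply: (@LqS_step R S q _ _ _ q0 K0).
set g2 := (fun x => (`|wab (q * a) (q * b) x * Delta2 (fun x => f x `^ q) (sf x) (cf x)| `^ 1)%:E).
set g1 := (fun x => (`|wab a b x * Delta2 f (sf x) (cf x)| `^ q)%:E).
have H2 := @int_scale_le _ _ _ (@lebesgue_measure R) S g2 _ K0 ltac:(by move=> x _; rewrite /g2 lee_fin powR_ge0).
have H1 : (\int[@lebesgue_measure R]_(x in S) g1 x <= \int[@lebesgue_measure R]_(x in S) ((2 `^ (q - 1))%:E * g2 x))%E.
  apply: (@ae_le_int _ _ _ (@lebesgue_measure R) S N).
  - exact: mN.
  - exact: N0.
  - by move=> x _; rewrite lee_fin powR_ge0.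
  - by move=> x _; rewrite mule_ge0 // /g2 lee_fin ?powR_ge0 // ltW.
  move=> x _ Nx; rewrite /g1 /g2 -EFinM lee_fin.
  have [h1 h2] := hN x Nx.
  apply: pw => //; first exact: ltW.
  exact: hz.
exact: (le_trans H1 H2).
Qed.

Lemma dd_iff {R : realType} (x y z gx gy gz : R) : x < y -> y < z ->
  (0 <= ((gz - gy) / (z - y) - (gy - gx) / (y - x)) / (z - x)) =
  ((z - x) * gy <= (z - y) * gx + (y - x) * gz).
Proof.
move=> xy yz.
have u0 : 0 < y - x by rewrite subr_gt0.
have v0 : 0 < z - y by rewrite subr_gt0.
have w0 : 0 < z - x by rewrite subr_gt0 (lt_trans xy).
have -> : ((gz - gy) / (z - y) - (gy - gx) / (y - x)) / (z - x) =
  ((z - y) * gx + (y - x) * gz - (z - x) * gy) / ((y - x) * (z - y) * (z - x)).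
  by field; rewrite !gt_eqF.
by rewrite pmulr_lge0 ?invr_gt0 ?mulr_gt0 // subr_ge0.
Qed.

Lemma M2_pow {R : realType} (q : R) (f : R -> R) : 1 <= q -> M2 f ->
  (forall x : R, -1 <= x <= 1 -> 0 <= f x) -> M2 (fun x => f x `^ q).
Proof.
move=> q1 cf f0 x y z x1 xy yz z1.
have := cf x y z x1 xy yz z1.
rewrite !dd_iff // => H.
have u0 : 0 < y - x by rewrite subr_gt0.
have v0 : 0 < z - y by rewrite subr_gt0.
have w0 : 0 < z - x by rewrite subr_gt0 (lt_trans xy).
have A0 : 0 <= f x by apply: f0; apply/andP; split; lra.
have B0 : 0 <= f y by apply: f0; apply/andP; split; lra.
have C0 : 0 <= f z by apply: f0; apply/andP; split; lra.
set t := (z - y) / (z - x).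
have t0 : 0 <= t by rewrite divr_ge0 // ltW.
have t1 : t <= 1 by rewrite ler_pdivrMr // mul1r; lra.
have e1 : 1 - t = (y - x) / (z - x) by rewrite /t; field; rewrite gt_eqF.
have hB : f y <= t * f x + (1 - t) * f z.
  have -> : t * f x + (1 - t) * f z = ((z - y) * f x + (y - x) * f z) / (z - x).
    by rewrite e1 /t; field; rewrite gt_eqF.
  by rewrite ler_pdivlMr // mulrC.
have := @powR_conv R q t (f x) (f z) q1 A0 C0 t0 t1.
have hB' : f y `^ q <= (t * f x + (1 - t) * f z) `^ q.
  by apply: ge0_ler_powR => //; rewrite ?(le_trans _ q1) // nnegrE // (le_trans B0 hB).
move=> hc; have := le_trans hB' hc.
rewrite e1 /t => {hc hB' hB}.
move: (f x `^ q) (f y `^ q) (f z `^ q) => X Y Z.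
have -> : (z - y) / (z - x) * X + (y - x) / (z - x) * Z = ((z - y) * X + (y - x) * Z) / (z - x).
  by field; rewrite gt_eqF.
by rewrite ler_pdivlMr // mulrC.
Qed.
Lemma null4 {R : realType} (p1 p2 p3 p4 : R) :
  measurable ([set p1] `|` [set p2] `|` [set p3] `|` [set p4]) /\
  lebesgue_measure ([set p1] `|` [set p2] `|` [set p3] `|` [set p4]) = 0%E.
Proof.
have m1 p : measurable [set p :> R] by exact: measurable_set1.
have n1 p : lebesgue_measure [set p :> R] = 0%E.
  by apply: countable_lebesgue_measure0; exact: countable1.
split; first by repeat apply: measurableU.
do 3 (apply: null_set_setU; try (by repeat apply: measurableU); try exact: n1).
Qed.

Lemma bad_phi {R : realType} (h x : R) :
  ~ ([set -1] `|` [set 1] `|` [set (h ^+ 2 - 1) / (h ^+ 2 + 1)] `|` [set (1 - h ^+ 2) / (1 + h ^+ 2)]) x ->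
  x - h * phi x != -1 /\ x + h * phi x != 1.
Proof.
move=> Nx.
have hp : 0 < h ^+ 2 + 1 by rewrite ltr_pwDr // sqr_ge0.
have hp' : 0 < 1 + h ^+ 2 by rewrite addrC.
have nm1 : x != -1 by apply/eqP => e; apply: Nx; left; left; left.
have n1 : x != 1 by apply/eqP => e; apply: Nx; left; left; right.
have np : x != (h ^+ 2 - 1) / (h ^+ 2 + 1) by apply/eqP => e; apply: Nx; left; right.
have nq : x != (1 - h ^+ 2) / (1 + h ^+ 2) by apply/eqP => e; apply: Nx; right.
rewrite /phi; set s := Num.sqrt (1 - x ^+ 2).
have ss : s ^+ 2 = 1 - x ^+ 2 \/ s = 0.
  have [le|lt] := lerP 0 (1 - x ^+ 2).
    by left; rewrite /s sqr_sqrtr.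
  by right; rewrite /s ler0_sqrtr // ltW.
split; apply/eqP => e.
- have e' : x + 1 = h * s by lra.
  case: ss => [ss|s0]; last by move: e'; rewrite s0 mulr0 => e''; move/eqP: nm1; apply; lra.
  have : (x + 1) * ((h ^+ 2 + 1) * x - (h ^+ 2 - 1)) = 0.
    have : (x + 1) ^+ 2 = h ^+ 2 * s ^+ 2 by rewrite e' exprMn.
    rewrite ss => E; rewrite -[RHS](subrr ((x + 1) ^+ 2)); rewrite {2}E; ring.
  move/eqP; rewrite mulf_eq0 => /orP[|].
    by rewrite addr_eq0 (negPf nm1).
  rewrite subr_eq0 => /eqP E; move/eqP: np; apply.
  by rewrite -E; field; rewrite gt_eqF.
- have e' : 1 - x = h * s by lra.
  case: ss => [ss|s0]; last by move: e'; rewrite s0 mulr0 => e''; move/eqP: n1; apply; lra.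
  have : (1 - x) * ((1 - h ^+ 2) - (1 + h ^+ 2) * x) = 0.
    have : (1 - x) ^+ 2 = h ^+ 2 * s ^+ 2 by rewrite e' exprMn.
    rewrite ss => E; rewrite -[RHS](subrr ((1 - x) ^+ 2)); rewrite {2}E; ring.
  move/eqP; rewrite mulf_eq0 => /orP[|].
    by rewrite subr_eq0 eq_sym (negPf n1).
  rewrite subr_eq0 => /eqP E; move/eqP: nq; apply.
  by rewrite E; field; rewrite gt_eqF.
Qed.

Lemma LqS_fin {R : realType} (S : set R) (q : R) (g1 g2 : R -> R) : 0 < q ->
  {in S, forall x, `|g2 x| `^ 1 = `|g1 x| `^ q} ->
  (LqS S q g1 < +oo)%E -> (LqS S 1 g2 < +oo)%E.
Proof.
move=> q0 E; rewrite /LqS invr1 poweRe1; last first.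
  by apply: integral_ge0 => x _; rewrite lee_fin powR_ge0.
have -> : (\int[@lebesgue_measure R]_(x in S) (`|g2 x| `^ 1)%:E =
     \int[@lebesgue_measure R]_(x in S) (`|g1 x| `^ q)%:E)%E.
  by apply: eq_integral => x xS; rewrite E.
apply: lty_poweRy.
by rewrite invr_neq0 // gt_eqF.
Qed.

Lemma inW_pow {R : realType} (q a b : R) (f : R -> R) : 1 < q ->
  (forall x : R, -1 <= x <= 1 -> 0 <= f x) -> inW q a b f ->
  inW 1 (q * a) (q * b) (fun x => f x `^ q).
Proof.
move=> q1 f0; rewrite /inW.
have q0 : 0 < q by rewrite (lt_trans _ q1).
apply: (@LqS_fin R _ q _ _ q0) => x; rewrite inE /= in_itv /= => xin.
have w0 : 0 <= wab a b x by rewrite /wab mulr_ge0 // powR_ge0.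
have fx0 : 0 <= f x by apply: f0.
rewrite wab_pow // powRr1 ?normr_ge0 // -powRM //.
by rewrite ger0_norm ?powR_ge0 // ger0_norm // mulr_ge0.
Qed.

Lemma sup_step {R : realType} (A : set R) (F G : R -> \bar R) (k r : R) :
  0 < k -> 0 <= r -> (forall h, A h -> (0 <= G h)%E) ->
  (forall h, A h -> (F h <= k%:E * G h `^ r)%E) ->
  (ereal_sup [set F h | h in A] <= k%:E * (ereal_sup [set G h | h in A]) `^ r)%E.
Proof.
move=> k0 r0 G0 FG; apply: ge_ereal_sup => _ [h Ah <-].
apply: (le_trans (FG h Ah)); apply: lee_wpmul2l; first by rewrite lee_fin ltW.
have Gs : (G h <= ereal_sup [set G h | h in A])%E by apply: ereal_sup_ubound; exists h.
apply: gt0_ler_poweR => //.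
- by rewrite in_itv /= leey andbT; exact: G0.
- by rewrite in_itv /= leey andbT; apply: le_trans Gs; exact: G0.
Qed.

Lemma sup_ge0 {R : realType} (A : set R) (G : R -> \bar R) (h0 : R) :
  A h0 -> (forall h, (0 <= G h)%E) -> (0 <= ereal_sup [set G h | h in A])%E.
Proof.
move=> Ah0 G0; apply: le_trans (G0 h0) _; apply: ereal_sup_ubound; by exists h0.
Qed.

Lemma sum3 {R : realType} (O1 O2 O3 P1 P2 P3 : \bar R) (k r : R) :
  0 < k -> 0 <= r -> (0 <= P1)%E -> (0 <= P2)%E -> (0 <= P3)%E ->
  (O1 <= k%:E * P1 `^ r)%E -> (O2 <= k%:E * P2 `^ r)%E -> (O3 <= k%:E * P3 `^ r)%E ->
  (O1 + O2 + O3 <= (3 * k)%:E * (P1 + P2 + P3) `^ r)%E.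
Proof.
move=> k0 r0 P10 P20 P30 H1 H2 H3.
have S0 : (0 <= P1 + P2 + P3)%E by rewrite !adde_ge0.
have mon P : (0 <= P)%E -> (P <= P1 + P2 + P3)%E -> (P `^ r <= (P1 + P2 + P3) `^ r)%E.
  move=> P0 PS; apply: gt0_ler_poweR => //.
  - by rewrite in_itv /= leey andbT.
  - by rewrite in_itv /= leey andbT.
have k0' : (0 <= k%:E)%E by rewrite lee_fin ltW.
have -> : ((3 * k)%:E = k%:E + k%:E + k%:E)%E.
  by rewrite -!EFinD; congr EFin; ring.
rewrite !ge0_muleDl // ?adde_ge0 //.
apply: leeD; first apply: leeD.
- apply: (le_trans H1); apply: lee_wpmul2l => //; apply: mon => //.
  by rewrite -addeA; apply: leeDl; rewrite adde_ge0.
- apply: (le_trans H2); apply: lee_wpmul2l => //; apply: mon => //.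
  by rewrite addeAC; apply: leeDr; rewrite adde_ge0.
- apply: (le_trans H3); apply: lee_wpmul2l => //; apply: mon => //.
  by apply: leeDr; rewrite adde_ge0.
Qed.

Theorem lemma4p5 (R : realType) (q a b : R) :
  1 < q ->
  exists c : R, 0 < c /\
    forall f : R -> R,
      M2 f ->
      (forall x : R, -1 <= x <= 1 -> 0 <= f x) ->
      inW q a b f ->
      [/\ M2 (fun x => f x `^ q),
          inW 1 (q * a) (q * b) (fun x => f x `^ q) &
          forall delta : R, 0 < delta ->
            (omega2 (wab a b) q f delta <=
             c%:E * (omega2 (wab (q * a) (q * b)) 1 (fun x => (f x `^ q)%R) delta) `^ q^-1)%E].
Proof.
move=> q1.
have q0 : 0 < q by rewrite (lt_trans _ q1).
have K0 : 0 < 2 `^ (q - 1) :> R by rewrite powR_gt0.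
have k0 : 0 < (2 `^ (q - 1)) `^ q^-1 :> R by rewrite powR_gt0.
have r0 : 0 <= q^-1 by rewrite invr_ge0 ltW.
exists (3 * (2 `^ (q - 1)) `^ q^-1); split; first by rewrite mulr_gt0.
move=> f cf f0 fW; split.
- exact: M2_pow (ltW q1) cf f0.
- exact: inW_pow.
move=> delta d0.
have LqS0 (S : set R) (p : R) (g : R -> R) : (0 <= LqS S p g)%E by rewrite /LqS poweR_ge0.
have dA : (`]0, delta]%classic : set R) delta by rewrite /= in_itv /= d0 lexx.
have d8 : 0 < 8 * delta ^+ 2 by rewrite mulr_gt0 // exprn_gt0.
have dB : (`]0, 8 * delta ^+ 2]%classic : set R) (8 * delta ^+ 2) by rewrite /= in_itv /= d8 lexx.
rewrite /omega2; apply: sum3 => //.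
- rewrite /Omega2; apply: (@sup_ge0 R _ _ delta); last by move=> h; exact: LqS0.
  by rewrite /= in_itv /= d0 lexx.
- rewrite /Omega2f; apply: (@sup_ge0 R _ _ (8 * delta ^+ 2)); last by move=> h; exact: LqS0.
  by rewrite /= in_itv /= d8 lexx.
- rewrite /Omega2b; apply: (@sup_ge0 R _ _ (8 * delta ^+ 2)); last by move=> h; exact: LqS0.
  by rewrite /= in_itv /= d8 lexx.
- rewrite /Omega2; apply: sup_step => // h; rewrite /= in_itv /= => /andP[h0 hd].
  have [mN N0] := null4 (-1) 1 ((h ^+ 2 - 1) / (h ^+ 2 + 1)) ((1 - h ^+ 2) / (1 + h ^+ 2)).
  have s0 x : 0 <= h * phi x by apply: mulr_ge0; [exact: ltW | rewrite /phi; exact: sqrtr_ge0].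
  apply: (@LqS_le R q a b f _ _ (fun x => h * phi x) (fun x => x) q1 cf f0 mN N0 s0).
  + by move=> x Nx; exact: bad_phi.
  + move=> x /andP[l r]; have := s0 x; move: l r; set u := h * phi x => l r u0.
    by apply/andP; split; lra.
- rewrite /Omega2f /Delta2f; apply: sup_step => // h; rewrite /= in_itv /= => /andP[h0 hd].
  have [mN N0] := null4 (-1) (1 - 2 * h) (-1) (-1).
  have s0 (x : R) : 0 <= h by rewrite ltW.
  apply: (@LqS_le R q a b f _ _ (fun _ => h) (fun x => x + h) q1 cf f0 mN N0 s0); clear s0.
  + move=> x Nx; split; apply/eqP => e; apply: Nx.
    * by left; left; left; rewrite /=; lra.
    * by left; left; right; rewrite /=; lra.
  + by move=> x /andP[l r]; apply/andP; split; lra.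
- rewrite /Omega2b /Delta2b; apply: sup_step => // h; rewrite /= in_itv /= => /andP[h0 hd].
  have [mN N0] := null4 1 (-1 + 2 * h) 1 1.
  have s0 (x : R) : 0 <= h by rewrite ltW.
  apply: (@LqS_le R q a b f _ _ (fun _ => h) (fun x => x - h) q1 cf f0 mN N0 s0); clear s0.
  + move=> x Nx; split; apply/eqP => e; apply: Nx.
    * by left; left; right; rewrite /=; lra.
    * by left; left; left; rewrite /=; lra.
  + by move=> x /andP[l r]; apply/andP; split; lra.
Qed.
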